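(* Let $X=\{x=(x_{i,j,k})\in\mathbb{F}_2^{\mathbb{Z}^3}: x_{i,j,k}+x_{i+1,j,k}+x_{i,j+1,k}=0\text{ for all }(i,j,k)\in\mathbb{Z}^3\}$ and let $\alpha$ be the $\mathbb{Z}^3$-action on $X$ by shifts, $(\alpha^{\mathbf{n}}x)_{\mathbf{m}}=x_{\mathbf{m}+\mathbf{n}}$. Then the upper growth rate of periodic points is $\mathsf{g}(\alpha)=\frac23\log2$; in particular $\zeta_\alpha$ has radius of convergence $2^{-2/3}$.
   Context: $\mathcal{L}_3$ is the set of finite-index subgroups of $\mathbb{Z}^3$, $[\Lambda]=|\mathbb{Z}^3/\Lambda|$, $\mathsf{F}_\alpha(\Lambda)$ is the number of $x\in X$ fixed by all $\alpha^{\mathbf{n}}$, $\mathbf{n}\in\Lambda$, $\mathsf{g}(\alpha)=\limsup_{[\Lambda]\to\infty}\frac{1}{[\Lambda]}\log\mathsf{F}_\alpha(\Lambda)$, and $\zeta_\alpha(z)=\exp\left(\sum_{\Lambda\in\mathcal{L}_3}\frac{\mathsf{F}_\alpha(\Lambda)}{[\Lambda]}z^{[\Lambda]}\right)$. *)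

(* Defs.v *)
From Stdlib Require Import Reals ZArith List.
Import ListNotations.
Open Scope R_scope.

Definition Z3 : Type := (Z * Z * Z)%type.
Definition z3add (m n : Z3) : Z3 :=
  match m, n with (a, b, c), (d, e, f) => ((a + d)%Z, (b + e)%Z, (c + f)%Z) end.
Definition z3opp (m : Z3) : Z3 :=
  match m with (a, b, c) => ((- a)%Z, (- b)%Z, (- c)%Z) end.
Definition z3sub (m n : Z3) : Z3 := z3add m (z3opp n).

(* A subset of Z^3 is given by its (boolean) indicator; finite-index subgroups
   are decidable, so this loses nothing, and with functional extensionality
   extensionally equal subgroups are equal. *)
Definition is_subgroup (L : Z3 -> bool) : Prop :=
  L (0%Z, 0%Z, 0%Z) = true /\
  (forall m n, L m = true -> L n = true -> L (z3add m n) = true) /\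
  (forall m, L m = true -> L (z3opp m) = true).

Definition has_index (L : Z3 -> bool) (n : nat) : Prop :=
  exists reps : list Z3,
    length reps = n /\
    (forall i j, (i < n)%nat -> (j < n)%nat ->
        L (z3sub (nth i reps (0%Z,0%Z,0%Z)) (nth j reps (0%Z,0%Z,0%Z))) = true -> i = j) /\
    (forall m, exists r, In r reps /\ L (z3sub m r) = true).

Definition inL3 (L : Z3 -> bool) : Prop := is_subgroup L /\ exists n, has_index L n.

Definition has_card {T : Type} (S : T -> Prop) (k : nat) : Prop :=
  exists l : list T, NoDup l /\ length l = k /\ forall x, S x <-> In x l.

(* The subshift X ⊂ F_2^{Z^3} (F_2 = bool, + = xorb). *)
Definition inX (x : Z3 -> bool) : Prop :=
  forall i j k : Z,
    xorb (xorb (x (i, j, k)) (x ((i + 1)%Z, j, k))) (x (i, (j + 1)%Z, k)) = false.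

(* x is fixed by every shift alpha^n, n in L: (alpha^n x)_m = x_{m+n}. *)
Definition fixed_by (L : Z3 -> bool) (x : Z3 -> bool) : Prop :=
  forall n, L n = true -> forall m, x (z3add m n) = x m.

Definition Fcount (L : Z3 -> bool) (k : nat) : Prop :=
  has_card (fun x => inX x /\ fixed_by L x) k.

(* Coefficient of z^n in log zeta: c = sum_{L in L_3, [L] = n} F(L)/[L]. *)
Definition zcoef (n : nat) (c : R) : Prop :=
  exists l : list ((Z3 -> bool) * nat),
    NoDup (map fst l) /\
    (forall L, (inL3 L /\ has_index L n) <-> In L (map fst l)) /\
    (forall p, In p l -> Fcount (fst p) (snd p)) /\
    c = fold_right (fun p s => INR (snd p) / INR n + s) 0 l.

(* Coefficients of exp(sum_{n>=1} a_n z^n): b_0 = 1,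
   b_m = (1/m) sum_{k=1}^m k a_k b_{m-k}.  expc_list a n = [b_n; ...; b_0]. *)
Fixpoint expc_list (a : nat -> R) (n : nat) : list R :=
  match n with
  | O => [1]
  | S n' =>
      let prev := expc_list a n' in
      (sum_f_R0 (fun j => INR (S j) * a (S j) * nth j prev 0) n' / INR (S n'))
        :: prev
  end.
Definition expc (a : nat -> R) (n : nat) : R := hd 0 (expc_list a n).

Definition is_radius (b : nat -> R) (rad : R) : Prop :=
  0 <= rad /\
  (forall r, 0 <= r < rad ->
     exists s, Un_cv (fun N => sum_f_R0 (fun n => Rabs (b n) * r ^ n) N) s) /\
  (forall r, rad < r -> ~ exists M, forall n, Rabs (b n) * r ^ n <= M).

(* Main.v *)
Require Import Defs.
From Stdlib Require Import Reals ZArith List Lia Lra Classical ClassicalEpsilon FunctionalExtensionality.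
Import ListNotations.
Open Scope R_scope.


Fixpoint findi {T} (p : T -> bool) (l : list T) : nat :=
  match l with [] => 0%nat | a :: l' => if p a then 0%nat else S (findi p l') end.

Lemma findi_spec {T} (p : T -> bool) (l : list T) d :
  (exists r, In r l /\ p r = true) ->
  (findi p l < length l)%nat /\ p (nth (findi p l) l d) = true.
Proof.
  induction l as [|a l IH]; simpl; intros [r [Hr Hp]]; [contradiction|].
  destruct (p a) eqn:E; [split; [lia|exact E]|].
  destruct Hr as [<-|Hr]; [congruence|].
  destruct IH as [H1 H2]; [eauto|]. split; [lia|exact H2].
Qed.

Fixpoint allb (p : nat) : list (list bool) :=
  match p with O => [[]] | S p' => map (cons true) (allb p') ++ map (cons false) (allb p') end.

Lemma allb_length p : length (allb p) = (2 ^ p)%nat.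
Proof. induction p; simpl; [reflexivity|]. rewrite length_app, !length_map, IHp. lia. Qed.

Lemma allb_in p l : length l = p -> In l (allb p).
Proof.
  revert l; induction p; intros l Hl; simpl.
  - destruct l; [left; reflexivity| simpl in Hl; lia].
  - destruct l as [|b l]; [simpl in Hl; lia|]. simpl in Hl. apply in_or_app.
    destruct b; [left|right]; apply in_map; apply IHp; lia.
Qed.

Lemma fin_sub {T} (l : list T) (P : T -> Prop) :
  (forall x, P x -> In x l) -> exists k, has_card P k.
Proof.
  revert P; induction l as [|a l IH]; intros P HS.
  - exists 0%nat, []. split; [constructor|]. split; [reflexivity|].
    intros x; split; [intros H; apply HS in H; contradiction | intros []].
  - destruct (IH (fun x => P x /\ x <> a)) as [k [l' [H1 [H2 H3]]]].
    { intros x [Hx Hne]. destruct (HS x Hx) as [->|H]; [congruence|exact H]. }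
    destruct (classic (P a)) as [Ha|Ha].
    + exists (S k), (a :: l'). split; [constructor; [intros Hin; apply H3 in Hin; tauto | exact H1]|].
      split; [simpl; lia|]. intros x; split.
      * intros Hx. destruct (classic (x = a)) as [->|Hne]; [left; reflexivity|right; apply H3; tauto].
      * intros [<-|Hin]; [exact Ha|apply H3 in Hin; tauto].
    + exists k, l'. split; [exact H1|]. split; [exact H2|]. intros x; split.
      * intros Hx. apply H3. split; [exact Hx|]. intros ->; contradiction.
      * intros Hin; apply H3 in Hin; tauto.
Qed.

Lemma NoDup_map_inj {A B} (f : A -> B) (l : list A) :
  NoDup l -> (forall x y, In x l -> In y l -> f x = f y -> x = y) -> NoDup (map f l).
Proof.
  induction l as [|a l IH]; intros Hn Hi; simpl; [constructor|].
  inversion Hn; subst. constructor.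
  - intros Hin. apply in_map_iff in Hin. destruct Hin as [y [Hy Hy']].
    assert (y = a) by (apply Hi; simpl; auto). subst; contradiction.
  - apply IH; [assumption|]. intros; apply Hi; simpl; auto.
Qed.

Definition recon (rel : Z3 -> Z3 -> bool) (B : list Z3) (bl : list bool) : Z3 -> bool :=
  fun m => nth (findi (rel m) B) bl false.

Lemma recon_eq rel B (f : Z3 -> bool) :
  (forall m, exists r, In r B /\ rel m r = true) ->
  (forall m r, rel m r = true -> f m = f r) ->
  f = recon rel B (map f B).
Proof.
  intros Hc Hf. apply functional_extensionality; intros m. unfold recon.
  destruct (findi_spec (rel m) B (0%Z,0%Z,0%Z) (Hc m)) as [H1 H2].
  rewrite nth_indep with (d' := f (0%Z,0%Z,0%Z)) by (rewrite length_map; exact H1).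
  rewrite map_nth. apply Hf. exact H2.
Qed.

Lemma has_card_le {T} (S : T -> Prop) k (l : list T) :
  has_card S k -> NoDup l -> (forall x, In x l -> S x) -> (length l <= k)%nat.
Proof.
  intros [l' [H1 [H2 H3]]] Hn Hs. rewrite <- H2. apply NoDup_incl_length; [exact Hn|].
  intros x Hx. apply H3, Hs, Hx.
Qed.

Lemma has_card_bound {T} (S : T -> Prop) k (F : T -> list bool) p :
  has_card S k -> (forall x, S x -> length (F x) = p) ->
  (forall x y, S x -> S y -> F x = F y -> x = y) -> (k <= 2 ^ p)%nat.
Proof.
  intros [l [H1 [H2 H3]]] HF Hi. rewrite <- H2, <- allb_length.
  rewrite <- (length_map F l). apply NoDup_incl_length.
  - apply NoDup_map_inj; [exact H1|]. intros x y Hx Hy; apply Hi; apply H3; assumption.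
  - intros z Hz. apply in_map_iff in Hz. destruct Hz as [x [<- Hx]]. apply allb_in, HF, H3, Hx.
Qed.
Lemma filter_lt {A} (f f' : A -> bool) (l : list A) y :
  (forall x, f' x = true -> f x = true) -> In y l -> f y = true -> f' y = false ->
  (length (filter f' l) < length (filter f l))%nat.
Proof.
  intros Hff. induction l as [|a l IH]; simpl; [tauto|].
  assert (Hle : forall l, (length (filter f' l) <= length (filter f l))%nat).
  { induction l0 as [|b l0 IH0]; simpl; [lia|].
    destruct (f' b) eqn:E1; [rewrite (Hff _ E1); simpl; lia|]. destruct (f b); simpl; lia. }
  intros [->|Hin] Hy Hy'.
  - rewrite Hy, Hy'. simpl. specialize (Hle l). lia.
  - specialize (IH Hin Hy Hy').
    destruct (f' a) eqn:E1; [rewrite (Hff _ E1); simpl; lia|]. destruct (f a); simpl; lia.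
Qed.

Section Greedy.
Variable X : Type.
Variable n : nat.
Variable P : X -> Prop.
Variable v : X -> nat -> bool.
Hypothesis Hdet : forall j, (j < n)%nat -> exists t, (length t <= 3)%nat /\ In j t /\
   (forall z, In z t -> (z < n)%nat) /\
   forall x y, P x -> P y -> (forall z, In z t -> z <> j -> v x z = v y z) -> v x j = v y j.

Definition Inv (Q C : list nat) : Prop :=
  NoDup Q /\ incl Q C /\ (forall c, In c C -> (c < n)%nat) /\ (length C <= 3 * length Q)%nat /\
  forall x y, P x -> P y -> (forall c, In c C -> ~ In c Q -> v x c = v y c) ->
    forall c, In c C -> v x c = v y c.

Definition unc (C : list nat) : nat :=
  length (filter (fun j => if in_dec Nat.eq_dec j C then false else true) (seq 0 n)).

Lemma greedy_aux : forall k Q C, unc C = k -> Inv Q C ->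
  exists Q' C', Inv Q' C' /\ forall j, (j < n)%nat -> In j C'.
Proof.
  induction k as [k IH] using (well_founded_induction lt_wf).
  intros Q C Hk HI.
  destruct (classic (forall j, (j < n)%nat -> In j C)) as [Hall|Hn].
  { exists Q, C; auto. }
  apply not_all_ex_not in Hn. destruct Hn as [j Hj].
  apply imply_to_and in Hj. destruct Hj as [Hjn HjC].
  destruct (Hdet j Hjn) as [t [Ht1 [Ht2 [Ht3 Ht4]]]].
  destruct HI as [I1 [I2 [I3 [I4 I5]]]].
  apply (IH (unc (t ++ C))) with (Q := j :: Q) (C := t ++ C); [|reflexivity|].
  - rewrite <- Hk. unfold unc. apply filter_lt with (y := j).
    + intros x. destruct (in_dec Nat.eq_dec x (t ++ C)) as [Hx|Hx]; [discriminate|].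
      destruct (in_dec Nat.eq_dec x C) as [Hx'|Hx']; [|reflexivity].
      exfalso; apply Hx, in_or_app; right; exact Hx'.
    + apply in_seq; lia.
    + destruct (in_dec Nat.eq_dec j C); [contradiction|reflexivity].
    + destruct (in_dec Nat.eq_dec j (t ++ C)) as [|Hx]; [reflexivity|].
      exfalso; apply Hx, in_or_app; left; exact Ht2.
  - split; [constructor; [intros Hq; apply HjC, I2, Hq|exact I1]|].
    split; [intros q [<-|Hq]; apply in_or_app; [left; exact Ht2|right; apply I2, Hq]|].
    split; [intros c Hc; apply in_app_or in Hc; destruct Hc; [apply Ht3|apply I3]; assumption|].
    split; [rewrite length_app; simpl; lia|].
    intros x y Hx Hy Hag.
    assert (HC : forall c, In c C -> v x c = v y c).
    { apply I5; [exact Hx|exact Hy|]. intros c Hc Hq. apply Hag; [apply in_or_app; right; exact Hc|].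
      intros [<-|Hq']; [contradiction|contradiction]. }
    assert (Hjv : v x j = v y j).
    { apply Ht4; [exact Hx|exact Hy|]. intros z Hz Hzj.
      destruct (in_dec Nat.eq_dec z C) as [HzC|HzC]; [apply HC, HzC|].
      apply Hag; [apply in_or_app; left; exact Hz|].
      intros [Hzj'|Hq]; [congruence|apply HzC, I2, Hq]. }
    intros c Hc. apply in_app_or in Hc. destruct Hc as [Hc|Hc]; [|apply HC, Hc].
    destruct (Nat.eq_dec c j) as [->|Hcj]; [exact Hjv|].
    destruct (in_dec Nat.eq_dec c C) as [HcC|HcC]; [apply HC, HcC|].
    apply Hag; [apply in_or_app; left; exact Hc|].
    intros [Hcj'|Hq]; [congruence|apply HcC, I2, Hq].
Qed.

Lemma greedy : exists Q, NoDup Q /\ (forall q, In q Q -> (q < n)%nat) /\ (n <= 3 * length Q)%nat /\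
   forall x y, P x -> P y -> (forall j, (j < n)%nat -> ~ In j Q -> v x j = v y j) ->
     forall j, (j < n)%nat -> v x j = v y j.
Proof.
  destruct (greedy_aux (unc []) [] [] eq_refl) as [Q [C [HI Hall]]]; [|destruct HI as [I1 [I2 [I3 [I4 I5]]]]].
  { split; [constructor|]. split; [intros q []|]. split; [intros c []|]. split; [simpl; lia|].
    intros x y _ _ _ c []. }
  exists Q. split; [exact I1|]. split; [intros q Hq; apply I3, I2, Hq|].
  split.
  - assert (n <= length C)%nat; [|lia].
    rewrite <- (length_seq n 0). apply NoDup_incl_length; [apply seq_NoDup|].
    intros j Hj; apply in_seq in Hj; apply Hall; lia.
  - intros x y Hx Hy Hag j Hj. apply I5; [exact Hx|exact Hy| |apply Hall, Hj].
    intros c Hc Hq. apply Hag; [apply I3, Hc|exact Hq].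
Qed.
End Greedy.

Ltac z3eq := repeat match goal with m : Z3 |- _ => destruct m as [[? ?] ?] end;
  unfold z3sub, z3add, z3opp; simpl; repeat f_equal; lia.

Definition d0 : Z3 := (0%Z, 0%Z, 0%Z).

Lemma sub_closed L a b : is_subgroup L -> L a = true -> L b = true -> L (z3sub a b) = true.
Proof. intros [H0 [Ha Ho]] ? ?. apply Ha; [assumption|apply Ho; assumption]. Qed.

Lemma fixed_rel L x m r : is_subgroup L -> fixed_by L x -> L (z3sub m r) = true -> x m = x r.
Proof.
  intros HL Hx H. rewrite <- (Hx _ H r). f_equal. z3eq.
Qed.

Section Fix.
Variable L : Z3 -> bool.
Variable n : nat.
Variable reps : list Z3.
Hypothesis HL : is_subgroup L.
Hypothesis Hlen : length reps = n.
Hypothesis Hcov : forall m, exists r, In r reps /\ L (z3sub m r) = true.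

Definition idx (m : Z3) : nat := findi (fun r => L (z3sub m r)) reps.

Lemma idx_spec m : (idx m < n)%nat /\ L (z3sub m (nth (idx m) reps d0)) = true.
Proof. rewrite <- Hlen. apply (findi_spec (fun r => L (z3sub m r)) reps d0 (Hcov m)). Qed.

Definition Sfix (x : Z3 -> bool) : Prop := inX x /\ fixed_by L x.
Definition vv (x : Z3 -> bool) (j : nat) : bool := x (nth j reps d0).

Lemma fix_idx x m : Sfix x -> x m = vv x (idx m).
Proof. intros [_ Hx]. apply (fixed_rel L); [exact HL|exact Hx|apply idx_spec]. Qed.

Lemma fix_ext x y : Sfix x -> Sfix y -> (forall j, (j < n)%nat -> vv x j = vv y j) -> x = y.
Proof.
  intros Hx Hy H. apply functional_extensionality; intros m.
  rewrite (fix_idx x m Hx), (fix_idx y m Hy). apply H, idx_spec.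
Qed.

Lemma Fcount_exists : exists k, Fcount L k.
Proof.
  apply (fin_sub (map (recon (fun m r => L (z3sub m r)) reps) (allb n))).
  intros x Hx. rewrite (recon_eq (fun m r => L (z3sub m r)) reps x Hcov).
  - apply in_map, allb_in. rewrite length_map; exact Hlen.
  - intros m r H. apply (fixed_rel L); [exact HL|apply Hx|exact H].
Qed.

Lemma fix_det j : (j < n)%nat -> exists t, (length t <= 3)%nat /\ In j t /\
   (forall z, In z t -> (z < n)%nat) /\
   forall x y, Sfix x -> Sfix y -> (forall z, In z t -> z <> j -> vv x z = vv y z) -> vv x j = vv y j.
Proof.
  intros Hj. unfold vv. set (r := nth j reps d0). destruct r as [[i1 i2] i3] eqn:Er.
  destruct (L (1%Z, 0%Z, 0%Z)) eqn:E1.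
  { exists [j]. split; [simpl; lia|]. split; [left; reflexivity|]. split; [intros z [<-|[]]; exact Hj|].
    assert (Hz : forall x, Sfix x -> x (i1, i2, i3) = false).
    { intros x [HX Hf]. specialize (HX i1 (i2 - 1)%Z i3).
      assert (x ((i1 + 1)%Z, (i2 - 1)%Z, i3) = x (i1, (i2 - 1)%Z, i3)) as Ee.
      { apply (fixed_rel L); [exact HL|exact Hf|]. match goal with |- L ?a = true => replace a with (1%Z,0%Z,0%Z) by z3eq end. exact E1. }
      rewrite Ee in HX. replace (i2 - 1 + 1)%Z with i2 in HX by lia.
      destruct (x (i1, (i2 - 1)%Z, i3)), (x (i1, i2, i3)); simpl in *; congruence. }
    intros x y Hx Hy _. rewrite (Hz x Hx), (Hz y Hy). reflexivity. }
  destruct (L (0%Z, 1%Z, 0%Z)) eqn:E2.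
  { exists [j]. split; [simpl; lia|]. split; [left; reflexivity|]. split; [intros z [<-|[]]; exact Hj|].
    assert (Hz : forall x, Sfix x -> x (i1, i2, i3) = false).
    { intros x [HX Hf]. specialize (HX (i1 - 1)%Z i2 i3).
      assert (x ((i1 - 1)%Z, (i2 + 1)%Z, i3) = x ((i1 - 1)%Z, i2, i3)) as Ee.
      { apply (fixed_rel L); [exact HL|exact Hf|]. match goal with |- L ?a = true => replace a with (0%Z,1%Z,0%Z) by z3eq end. exact E2. }
      rewrite Ee in HX. replace (i1 - 1 + 1)%Z with i1 in HX by lia.
      destruct (x ((i1 - 1)%Z, i2, i3)), (x (i1, i2, i3)); simpl in *; congruence. }
    intros x y Hx Hy _. rewrite (Hz x Hx), (Hz y Hy). reflexivity. }
  set (A := idx ((i1 + 1)%Z, i2, i3)). set (B := idx (i1, (i2 + 1)%Z, i3)).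
  destruct (idx_spec ((i1 + 1)%Z, i2, i3)) as [HA1 HA2].
  destruct (idx_spec (i1, (i2 + 1)%Z, i3)) as [HB1 HB2].
  fold A in HA1, HA2. fold B in HB1, HB2.
  exists [j; A; B]. split; [simpl; lia|]. split; [left; reflexivity|].
  split; [intros z [<-|[<-|[<-|[]]]]; assumption|].
  assert (HAj : A <> j).
  { intros HAj. rewrite HAj in HA2. fold r in HA2. rewrite Er in HA2.
    match type of HA2 with L ?a = true => replace a with (1%Z,0%Z,0%Z) in HA2 by z3eq end. congruence. }
  assert (HBj : B <> j).
  { intros HBj. rewrite HBj in HB2. fold r in HB2. rewrite Er in HB2.
    match type of HB2 with L ?a = true => replace a with (0%Z,1%Z,0%Z) in HB2 by z3eq end. congruence. }
  assert (Hform : forall x, Sfix x -> x (i1, i2, i3) = xorb (vv x A) (vv x B)).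
  { intros x Hx. unfold A, B. rewrite <- (fix_idx x _ Hx), <- (fix_idx x _ Hx).
    pose proof (proj1 Hx i1 i2 i3) as HX.
    destruct (x (i1, i2, i3)), (x ((i1 + 1)%Z, i2, i3)), (x (i1, (i2 + 1)%Z, i3)); simpl in *; congruence. }
  intros x y Hx Hy Hag. rewrite (Hform x Hx), (Hform y Hy).
  unfold vv. rewrite (Hag A), (Hag B); auto; simpl; auto.
Qed.

Lemma Fcount_bound k : Fcount L k -> (k ^ 3 <= 4 ^ n)%nat.
Proof.
  intros Hk.
  destruct (greedy (Z3 -> bool) n Sfix vv fix_det) as [Q [HQ1 [HQ2 [HQ3 HQ4]]]].
  set (Pl := filter (fun j => if in_dec Nat.eq_dec j Q then false else true) (seq 0 n)).
  assert (HPQ : (length Pl + length Q <= n)%nat).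
  { rewrite <- length_app, <- (length_seq n 0). apply NoDup_incl_length.
    - apply NoDup_app; [apply NoDup_filter, seq_NoDup|exact HQ1|].
      intros a Ha Hb. unfold Pl in Ha. apply filter_In in Ha. destruct Ha as [_ Ha].
      destruct (in_dec Nat.eq_dec a Q); [discriminate|contradiction].
    - intros a Ha. apply in_app_or in Ha. apply in_seq. destruct Ha as [Ha|Ha].
      + unfold Pl in Ha. apply filter_In in Ha. destruct Ha as [Ha _]. apply in_seq in Ha. lia.
      + apply HQ2 in Ha. lia. }
  assert (Hk2 : (k <= 2 ^ length Pl)%nat).
  { apply (has_card_bound Sfix k (fun x => map (vv x) Pl) (length Pl) Hk).
    - intros x _. apply length_map.
    - intros x y Hx Hy Heq. apply fix_ext; [exact Hx|exact Hy|].
      apply (HQ4 x y Hx Hy). intros j Hj HjQ.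
      assert (HjP : In j Pl).
      { unfold Pl. apply filter_In. split; [apply in_seq; lia|].
        destruct (in_dec Nat.eq_dec j Q); [contradiction|reflexivity]. }
      apply (In_nth Pl j 0%nat) in HjP. destruct HjP as [p [Hp Hpj]].
      assert (H := f_equal (fun l => nth p l false) Heq). simpl in H.
      rewrite (nth_indep _ false (vv x 0%nat)) in H by (rewrite length_map; exact Hp).
      rewrite (nth_indep _ false (vv y 0%nat)) in H by (rewrite length_map; exact Hp).
      rewrite !map_nth, Hpj in H. exact H. }
  assert (Hp3 : (3 * length Pl <= 2 * n)%nat) by lia.
  apply Nat.le_trans with ((2 ^ length Pl) ^ 3)%nat.
  - apply Nat.pow_le_mono_l; exact Hk2.
  - rewrite <- Nat.pow_mul_r. replace 4%nat with (2 ^ 2)%nat by reflexivity.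
    rewrite <- Nat.pow_mul_r. apply Nat.pow_le_mono_r; lia.
Qed.
End Fix.


Lemma allb_len p l : In l (allb p) -> length l = p.
Proof.
  revert l; induction p; simpl; intros l H.
  - destruct H as [<-|[]]; reflexivity.
  - apply in_app_or in H. destruct H as [H|H]; apply in_map_iff in H; destruct H as [l' [<- H]];
    simpl; f_equal; apply IHp, H.
Qed.

Lemma allb_NoDup p : NoDup (allb p).
Proof.
  induction p; simpl; [repeat constructor; intros []|].
  apply NoDup_app.
  - apply NoDup_map_inj; [exact IHp|]. intros x y _ _ H; injection H; auto.
  - apply NoDup_map_inj; [exact IHp|]. intros x y _ _ H; injection H; auto.
  - intros a H1 H2. apply in_map_iff in H1, H2. destruct H1 as [x [<- _]], H2 as [y [H _]]. discriminate.
Qed.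

Lemma NoDup_prod {A B} (l : list A) (l' : list B) : NoDup l -> NoDup l' -> NoDup (list_prod l l').
Proof.
  induction l as [|a l IH]; intros H1 H2; simpl; [constructor|]. inversion H1; subst.
  apply NoDup_app.
  - apply NoDup_map_inj; [exact H2|]. intros x y _ _ H; injection H; auto.
  - apply IH; assumption.
  - intros [x y] Ha Hb. apply in_map_iff in Ha. destruct Ha as [z [Hz _]]. injection Hz; intros _ <-.
    apply in_prod_iff in Hb. tauto.
Qed.

Section Ex.
Variable m : nat.
Hypothesis Hm : (1 <= m)%nat.
Let M := Z.of_nat m.
Lemma M_pos : (0 < M)%Z. Proof. unfold M; lia. Qed.

Definition Lst (p : Z3) : bool :=
  match p with (a, b, c) => (Z.eqb ((a - b) mod 3) 0 && Z.eqb (c mod M) 0)%bool end.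

Lemma Lst_iff a b c : Lst (a, b, c) = true <-> (3 | a - b)%Z /\ (M | c)%Z.
Proof.
  pose proof M_pos. simpl. rewrite Bool.andb_true_iff, !Z.eqb_eq, !Z.mod_divide by lia. tauto.
Qed.

Lemma Lst_sub : is_subgroup Lst.
Proof.
  split; [|split].
  - apply Lst_iff. split; apply Z.divide_0_r.
  - intros [[a b] c] [[d e] f] H1 H2. apply Lst_iff in H1, H2. simpl. apply Lst_iff.
    destruct H1 as [H1 H1'], H2 as [H2 H2']. split.
    + replace (a + d - (b + e))%Z with ((a - b) + (d - e))%Z by lia. apply Z.divide_add_r; assumption.
    + apply Z.divide_add_r; assumption.
  - intros [[a b] c] H1. apply Lst_iff in H1. simpl. apply Lst_iff. destruct H1 as [H1 H1']. split.
    + replace (- a - - b)%Z with (- (a - b))%Z by lia. apply Z.divide_opp_r; assumption.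
    + apply Z.divide_opp_r; assumption.
Qed.

Definition fr (i : nat) : Z3 := (Z.of_nat (i mod 3), 0%Z, Z.of_nat (i / 3)).
Definition repsx : list Z3 := map fr (seq 0 (3 * m)).

Lemma Lst_index : has_index Lst (3 * m).
Proof.
  pose proof M_pos.
  exists repsx. split; [unfold repsx; rewrite length_map, length_seq; reflexivity|]. split.
  - intros i j Hi Hj. unfold repsx. change (0%Z, 0%Z, 0%Z) with (fr 0).
    rewrite !map_nth, !seq_nth by lia. unfold fr, z3sub, z3add, z3opp. rewrite Lst_iff.
    rewrite !Nat.add_0_l. intros [[q1 H1] [q2 H2]].
    pose proof (Nat.mod_upper_bound i 3 ltac:(lia)). pose proof (Nat.mod_upper_bound j 3 ltac:(lia)).
    assert (Hm3 : (i mod 3 = j mod 3)%nat) by lia.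
    assert (Hi3 : (i / 3 < m)%nat) by (apply Nat.Div0.div_lt_upper_bound; lia).
    assert (Hj3 : (j / 3 < m)%nat) by (apply Nat.Div0.div_lt_upper_bound; lia).
    assert (Hd3 : (i / 3 = j / 3)%nat).
    { unfold M in H2. assert (q2 = 0%Z) by nia. subst. lia. }
    rewrite (Nat.div_mod_eq i 3), (Nat.div_mod_eq j 3). lia.
  - intros [[a b] c].
    pose proof (Z.mod_pos_bound (a - b) 3 ltac:(lia)). pose proof (Z.mod_pos_bound c M H).
    set (s := ((a - b) mod 3)%Z). set (t := (c mod M)%Z).
    exists (Z.of_nat (Z.to_nat s), 0%Z, Z.of_nat (Z.to_nat t)). split.
    + unfold repsx. apply in_map_iff. exists (3 * Z.to_nat t + Z.to_nat s)%nat. split.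
      * unfold fr. rewrite Nat.mul_comm, Nat.div_add_l, Nat.add_comm, Nat.Div0.mod_add by lia.
        rewrite Nat.mod_small, Nat.div_small by lia. rewrite Nat.add_0_r. reflexivity.
      * apply in_seq. unfold M in *. lia.
    + rewrite !Z2Nat.id by lia. simpl. apply Lst_iff. split.
      * exists ((a - b) / 3)%Z. pose proof (Z.div_mod (a - b) 3 ltac:(lia)). unfold s. lia.
      * exists (c / M)%Z. pose proof (Z.div_mod c M ltac:(lia)). unfold t. lia.
Qed.

Definition psi (pl ql : list bool) (s : Z) (t : nat) : bool :=
  if Z.eqb s 0 then nth t pl false else if Z.eqb s 1 then nth t ql false
  else xorb (nth t pl false) (nth t ql false).

Definition xst (pq : list bool * list bool) (p : Z3) : bool :=
  match p with (a, b, c) => psi (fst pq) (snd pq) ((a - b) mod 3) (Z.to_nat (c mod M)) end.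

Lemma mod3_cases d : ((d mod 3 = 0 /\ (d + 1) mod 3 = 1 /\ (d - 1) mod 3 = 2) \/
  (d mod 3 = 1 /\ (d + 1) mod 3 = 2 /\ (d - 1) mod 3 = 0) \/
  (d mod 3 = 2 /\ (d + 1) mod 3 = 0 /\ (d - 1) mod 3 = 1))%Z.
Proof. Z.div_mod_to_equations. lia. Qed.

Lemma xst_fix pq : Sfix Lst (xst pq).
Proof.
  split.
  - intros i j k. simpl.
    replace (i + 1 - j)%Z with ((i - j) + 1)%Z by lia. replace (i - (j + 1))%Z with ((i - j) - 1)%Z by lia.
    unfold psi.
    destruct (mod3_cases (i - j)) as [[-> [-> ->]]|[[-> [-> ->]]|[-> [-> ->]]]]; simpl;
    destruct (nth _ (fst pq) false), (nth _ (snd pq) false); reflexivity.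
  - intros [[d e] f] Hn [[a b] c]. apply Lst_iff in Hn. destruct Hn as [[q1 H1] [q2 H2]].
    simpl. replace (a + d - (b + e))%Z with ((a - b) + q1 * 3)%Z by lia.
    rewrite H2, Z_mod_plus_full, Z_mod_plus_full. reflexivity.
Qed.

Lemma xst_inj pq pq' : In pq (list_prod (allb m) (allb m)) -> In pq' (list_prod (allb m) (allb m)) ->
  xst pq = xst pq' -> pq = pq'.
Proof.
  destruct pq as [p q], pq' as [p' q']. rewrite !in_prod_iff. intros [H1 H2] [H3 H4] H.
  apply allb_len in H1, H2, H3, H4. pose proof M_pos.
  assert (Ht : forall t, (t < m)%nat -> Z.to_nat (Z.of_nat t mod M) = t).
  { intros t Ht. rewrite Z.mod_small by (unfold M; lia). lia. }
  f_equal; apply nth_ext with (d := false) (d' := false); try congruence; intros t Ht'.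
  - assert (E := f_equal (fun f => f (0%Z, 0%Z, Z.of_nat t)) H). simpl in E.
    rewrite Ht in E by congruence. exact E.
  - assert (E := f_equal (fun f => f (1%Z, 0%Z, Z.of_nat t)) H). simpl in E.
    rewrite Ht in E by congruence. exact E.
Qed.

Lemma Lst_count k : Fcount Lst k -> (4 ^ m <= k)%nat.
Proof.
  intros Hk. replace (4 ^ m)%nat with (length (map xst (list_prod (allb m) (allb m)))).
  - apply (has_card_le _ _ _ Hk).
    + apply NoDup_map_inj; [apply NoDup_prod; apply allb_NoDup|]. apply xst_inj.
    + intros x Hx. apply in_map_iff in Hx. destruct Hx as [pq [<- _]]. apply xst_fix.
  - rewrite length_map, length_prod, allb_length. rewrite <- Nat.pow_mul_l. reflexivity.
Qed.
End Ex.


Definition zsc (k : Z) (v : Z3) : Z3 := match v with (a, b, c) => ((k * a)%Z, (k * b)%Z, (k * c)%Z) end.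

Ltac z3ring := repeat match goal with m : Z3 |- _ => destruct m as [[? ?] ?] end;
  unfold zsc, z3sub, z3add, z3opp; simpl; apply pair_equal_spec; split; [apply pair_equal_spec; split|]; ring.

Lemma L_zsc L v k : is_subgroup L -> L v = true -> L (zsc k v) = true.
Proof.
  intros HL Hv.
  assert (Hn : forall k : nat, L (zsc (Z.of_nat k) v) = true).
  { induction k0 as [|k0 IH].
    - replace (zsc (Z.of_nat 0) v) with (0%Z, 0%Z, 0%Z) by z3ring. apply HL.
    - replace (zsc (Z.of_nat (S k0)) v) with (z3add (zsc (Z.of_nat k0) v) v)
        by (rewrite Nat2Z.inj_succ; z3ring). apply HL; assumption. }
  destruct (Z_le_gt_dec 0 k) as [Hk|Hk].
  - rewrite <- (Z2Nat.id k Hk). apply Hn.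
  - replace (zsc k v) with (z3opp (zsc (Z.of_nat (Z.to_nat (- k))) v))
      by (rewrite Z2Nat.id by lia; z3ring). apply HL, Hn.
Qed.

Lemma pigeon n (h : nat -> nat) : (forall i, (i <= n)%nat -> (h i < n)%nat) ->
  exists i j, (i < j <= n)%nat /\ h i = h j.
Proof.
  intros Hh. apply NNPP. intros Hno.
  assert (HND : NoDup (map h (seq 0 (S n)))).
  { apply NoDup_map_inj; [apply seq_NoDup|]. intros x y Hx Hy Hxy.
    apply in_seq in Hx, Hy. destruct (Nat.lt_total x y) as [Hl|[Hl|Hl]]; [|exact Hl|];
    exfalso; apply Hno; [exists x, y|exists y, x]; split; auto; lia. }
  assert (H := NoDup_incl_length HND (l' := seq 0 n)).
  rewrite length_map, !length_seq in H. apply (Nat.nle_succ_diag_l n), H.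
  intros z Hz. apply in_map_iff in Hz. destruct Hz as [x [<- Hx]]. apply in_seq in Hx.
  apply in_seq. specialize (Hh x ltac:(lia)). lia.
Qed.

Lemma min_nat (P : nat -> Prop) : (exists k, P k) -> exists k, P k /\ forall j, (j < k)%nat -> ~ P j.
Proof.
  intros [k Hk]. revert Hk. induction k as [k IH] using (well_founded_induction lt_wf). intros Hk.
  destruct (classic (exists j, (j < k)%nat /\ P j)) as [[j [Hj Pj]]|Hn].
  - exact (IH j Hj Pj).
  - exists k. split; [exact Hk|]. intros j Hj Pj. apply Hn; eauto.
Qed.

Definition spanP (a b c d e f : nat) (m : Z3) : Prop :=
  exists p q s : Z, m = z3add (z3add (zsc p (Z.of_nat a, 0%Z, 0%Z)) (zsc q (Z.of_nat b, Z.of_nat c, 0%Z)))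
                      (zsc s (Z.of_nat d, Z.of_nat e, Z.of_nat f)).

Definition hnfL (pl : list nat) : Z3 -> bool := fun m =>
  if excluded_middle_informative (spanP (nth 0 pl 0%nat) (nth 1 pl 0%nat) (nth 2 pl 0%nat)
       (nth 3 pl 0%nat) (nth 4 pl 0%nat) (nth 5 pl 0%nat) m) then true else false.

Fixpoint alltup (k n : nat) : list (list nat) :=
  match k with O => [[]] | S k' => flat_map (fun i => map (cons i) (alltup k' n)) (seq 0 (S n)) end.

Lemma alltup_length k n : length (alltup k n) = (S n ^ k)%nat.
Proof.
  induction k; [reflexivity|].
  assert (H : forall l, length (flat_map (fun i => map (cons i) (alltup k n)) l) = (length l * S n ^ k)%nat).
  { induction l; simpl; [reflexivity|]. rewrite length_app, length_map, IHl, IHk. lia. }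
  change (alltup (S k) n) with (flat_map (fun i => map (cons i) (alltup k n)) (seq 0 (S n))).
  rewrite H, length_seq. simpl. lia.
Qed.

Lemma alltup_in k n l : length l = k -> (forall x, In x l -> (x <= n)%nat) -> In l (alltup k n).
Proof.
  revert l; induction k; intros l Hl Hx; cbn [alltup].
  - destruct l; [left; reflexivity|simpl in Hl; lia].
  - destruct l as [|i l]; [simpl in Hl; lia|]. apply in_flat_map. exists i. split.
    + apply in_seq. specialize (Hx i (or_introl eq_refl)). lia.
    + apply in_map. apply IHk; [simpl in Hl; lia|]. intros x H; apply Hx; right; exact H.
Qed.

Section HNF.
Variable L : Z3 -> bool.
Variable n : nat.
Variable reps : list Z3.
Hypothesis HL : is_subgroup L.
Hypothesis Hlen : length reps = n.
Hypothesis Hcov : forall m, exists r, In r reps /\ L (z3sub m r) = true.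

Lemma L_add a b : L a = true -> L b = true -> L (z3add a b) = true.
Proof. apply HL. Qed.

Lemma mult_in v : exists d : nat, (1 <= d <= n)%nat /\ L (zsc (Z.of_nat d) v) = true.
Proof.
  destruct (pigeon n (fun i => idx L reps (zsc (Z.of_nat i) v))) as [i [j [Hij Hh]]].
  { intros i _. apply (idx_spec L n reps Hlen Hcov). }
  exists (j - i)%nat. split; [lia|].
  pose proof (proj2 (idx_spec L n reps Hlen Hcov (zsc (Z.of_nat i) v))) as H1.
  pose proof (proj2 (idx_spec L n reps Hlen Hcov (zsc (Z.of_nat j) v))) as H2.
  simpl in Hh. rewrite Hh in H1.
  pose proof (sub_closed L _ _ HL H2 H1) as H.
  match type of H with L ?x = true => replace (zsc (Z.of_nat (j - i)) v) with x; [exact H|] end.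
  rewrite Nat2Z.inj_sub by lia. set (r := nth _ reps d0). clearbody r. clear -r. z3ring.
Qed.

Lemma hnf_exists : exists pl, In pl (alltup 6 n) /\ L = hnfL pl.
Proof.
  destruct (min_nat (fun z => (0 < z)%nat /\ exists x y, L (x, y, Z.of_nat z) = true)) as [f [[Hf0 [x3 [y3 Hf]]] Hfmin]].
  { destruct (mult_in (0%Z, 0%Z, 1%Z)) as [d [Hd HLd]]. exists d. split; [lia|].
    exists 0%Z, 0%Z. replace (0%Z, 0%Z, Z.of_nat d) with (zsc (Z.of_nat d) (0%Z, 0%Z, 1%Z)) by z3ring. exact HLd. }
  assert (Hfn : (f <= n)%nat).
  { destruct (mult_in (0%Z, 0%Z, 1%Z)) as [d [Hd HLd]]. destruct (Nat.le_gt_cases f d) as [|Hl]; [lia|].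
    exfalso. apply (Hfmin d Hl). split; [lia|]. exists 0%Z, 0%Z.
    replace (0%Z, 0%Z, Z.of_nat d) with (zsc (Z.of_nat d) (0%Z, 0%Z, 1%Z)) by z3ring. exact HLd. }
  destruct (min_nat (fun y => (0 < y)%nat /\ exists x, L (x, Z.of_nat y, 0%Z) = true)) as [c [[Hc0 [x2 Hc]] Hcmin]].
  { destruct (mult_in (0%Z, 1%Z, 0%Z)) as [d [Hd HLd]]. exists d. split; [lia|].
    exists 0%Z. replace (0%Z, Z.of_nat d, 0%Z) with (zsc (Z.of_nat d) (0%Z, 1%Z, 0%Z)) by z3ring. exact HLd. }
  assert (Hcn : (c <= n)%nat).
  { destruct (mult_in (0%Z, 1%Z, 0%Z)) as [d [Hd HLd]]. destruct (Nat.le_gt_cases c d) as [|Hl]; [lia|].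
    exfalso. apply (Hcmin d Hl). split; [lia|]. exists 0%Z.
    replace (0%Z, Z.of_nat d, 0%Z) with (zsc (Z.of_nat d) (0%Z, 1%Z, 0%Z)) by z3ring. exact HLd. }
  destruct (min_nat (fun x => (0 < x)%nat /\ L (Z.of_nat x, 0%Z, 0%Z) = true)) as [a [[Ha0 Ha] Hamin]].
  { destruct (mult_in (1%Z, 0%Z, 0%Z)) as [d [Hd HLd]]. exists d. split; [lia|].
    replace (Z.of_nat d, 0%Z, 0%Z) with (zsc (Z.of_nat d) (1%Z, 0%Z, 0%Z)) by z3ring. exact HLd. }
  assert (Han : (a <= n)%nat).
  { destruct (mult_in (1%Z, 0%Z, 0%Z)) as [d [Hd HLd]]. destruct (Nat.le_gt_cases a d) as [|Hl]; [lia|].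
    exfalso. apply (Hamin d Hl). split; [lia|].
    replace (Z.of_nat d, 0%Z, 0%Z) with (zsc (Z.of_nat d) (1%Z, 0%Z, 0%Z)) by z3ring. exact HLd. }
  set (A := Z.of_nat a). set (C := Z.of_nat c). set (F := Z.of_nat f).
  assert (HA : (0 < A)%Z) by (unfold A; lia). assert (HC : (0 < C)%Z) by (unfold C; lia).
  assert (HF : (0 < F)%Z) by (unfold F; lia).
  set (b := (x2 mod A)%Z).
  assert (Hb : L (b, C, 0%Z) = true).
  { replace (b, C, 0%Z) with (z3add (x2, C, 0%Z) (zsc (- (x2 / A)) (A, 0%Z, 0%Z))).
    - apply L_add; [exact Hc|apply L_zsc; [exact HL|exact Ha]].
    - unfold b. pose proof (Z.div_mod x2 A ltac:(lia)). unfold zsc, z3add. f_equal; [f_equal|]; lia. }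
  set (e := (y3 mod C)%Z). set (x3' := (x3 - (y3 / C) * b)%Z).
  assert (He : L (x3', e, F) = true).
  { replace (x3', e, F) with (z3add (x3, y3, F) (zsc (- (y3 / C)) (b, C, 0%Z))).
    - apply L_add; [exact Hf|apply L_zsc; [exact HL|exact Hb]].
    - unfold e, x3'. pose proof (Z.div_mod y3 C ltac:(lia)). unfold zsc, z3add. f_equal; [f_equal|]; lia. }
  set (d := (x3' mod A)%Z).
  assert (Hd : L (d, e, F) = true).
  { replace (d, e, F) with (z3add (x3', e, F) (zsc (- (x3' / A)) (A, 0%Z, 0%Z))).
    - apply L_add; [exact He|apply L_zsc; [exact HL|exact Ha]].
    - unfold d. pose proof (Z.div_mod x3' A ltac:(lia)). unfold zsc, z3add. f_equal; [f_equal|]; lia. }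
  pose proof (Z.mod_pos_bound x2 A HA). pose proof (Z.mod_pos_bound y3 C HC).
  pose proof (Z.mod_pos_bound x3' A HA). fold b e d in H, H0, H1.
  exists [a; Z.to_nat b; c; Z.to_nat d; Z.to_nat e; f]. split.
  { apply alltup_in; [reflexivity|]. intros x Hx. simpl in Hx.
    destruct Hx as [<-|[<-|[<-|[<-|[<-|[<-|[]]]]]]]; unfold A, C in *; lia. }
  apply functional_extensionality. intros [[x y] z]. unfold hnfL. simpl.
  unfold spanP. rewrite !Z2Nat.id by lia. fold A C F.
  destruct (excluded_middle_informative _) as [Hs|Hs].
  - destruct Hs as [p [q [s ->]]]. apply L_add; [apply L_add|]; apply L_zsc; auto.
  - destruct (L (x, y, z)) eqn:Exyz; [|reflexivity]. exfalso. apply Hs.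
    set (s := (z / F)%Z). set (r3 := (z mod F)%Z).
    pose proof (Z.div_mod z F ltac:(lia)). pose proof (Z.mod_pos_bound z F HF). fold s r3 in H2, H3.
    assert (H4 : L (x - s * d, y - s * e, r3)%Z = true).
    { replace (x - s * d, y - s * e, r3)%Z with (z3add (x, y, z) (zsc (- s) (d, e, F))) by
        (unfold zsc, z3add; f_equal; [f_equal|]; lia). apply L_add; [exact Exyz|apply L_zsc; auto]. }
    assert (Hr3 : r3 = 0%Z).
    { destruct (Z.eq_dec r3 0) as [|Hne]; [assumption|]. exfalso.
      apply (Hfmin (Z.to_nat r3)); [unfold F in *; lia|]. split; [lia|].
      exists (x - s * d)%Z, (y - s * e)%Z. rewrite Z2Nat.id by lia. exact H4. }
    rewrite Hr3 in H4.
    set (q := ((y - s * e) / C)%Z). set (r2 := ((y - s * e) mod C)%Z).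
    pose proof (Z.div_mod (y - s * e) C ltac:(lia)). pose proof (Z.mod_pos_bound (y - s * e) C HC).
    fold q r2 in H5, H6.
    assert (H7 : L (x - s * d - q * b, r2, 0)%Z = true).
    { replace (x - s * d - q * b, r2, 0)%Z with (z3add (x - s * d, y - s * e, 0)%Z (zsc (- q) (b, C, 0%Z))) by
        (unfold zsc, z3add; f_equal; [f_equal|]; lia). apply L_add; [exact H4|apply L_zsc; auto]. }
    assert (Hr2 : r2 = 0%Z).
    { destruct (Z.eq_dec r2 0) as [|Hne]; [assumption|]. exfalso.
      apply (Hcmin (Z.to_nat r2)); [unfold C in *; lia|]. split; [lia|].
      exists (x - s * d - q * b)%Z. rewrite Z2Nat.id by lia. exact H7. }
    rewrite Hr2 in H7.
    set (p := ((x - s * d - q * b) / A)%Z). set (r1 := ((x - s * d - q * b) mod A)%Z).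
    pose proof (Z.div_mod (x - s * d - q * b) A ltac:(lia)). pose proof (Z.mod_pos_bound (x - s * d - q * b) A HA).
    fold p r1 in H8, H9.
    assert (H10 : L (r1, 0, 0)%Z = true).
    { replace (r1, 0, 0)%Z with (z3add (x - s * d - q * b, 0, 0)%Z (zsc (- p) (A, 0%Z, 0%Z))) by
        (unfold zsc, z3add; f_equal; [f_equal|]; lia). apply L_add; [exact H7|apply L_zsc; auto]. }
    assert (Hr1 : r1 = 0%Z).
    { destruct (Z.eq_dec r1 0) as [|Hne]; [assumption|]. exfalso.
      apply (Hamin (Z.to_nat r1)); [unfold A in *; lia|]. split; [lia|].
      rewrite Z2Nat.id by lia. exact H10. }
    exists p, q, s. unfold zsc, z3add. f_equal; [f_equal|]; lia.
Qed.
End HNF.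

Lemma subgroups_cover n L : inL3 L -> has_index L n -> In L (map hnfL (alltup 6 n)).
Proof.
  intros [HL _] [reps [Hlen [_ Hcov]]].
  destruct (hnf_exists L n reps HL Hlen Hcov) as [pl [Hpl ->]]. apply in_map, Hpl.
Qed.


Lemma pow_le1 θ k : 0 <= θ <= 1 -> θ ^ k <= 1.
Proof.
  intros H. induction k; simpl; [lra|].
  assert (0 <= θ ^ k) by (apply pow_le; lra). nra.
Qed.

Lemma lin_geo θ : 0 <= θ < 1 -> exists D, forall k, INR (S k) * θ ^ k <= D.
Proof.
  intros Hθ. destruct (Req_dec θ 0) as [->|Hne].
  - exists 1. intros [|k]; simpl; [lra|]. rewrite Rmult_0_l, Rmult_0_r. lra.
  - set (h := / θ - 1).
    assert (Hθp : 0 < θ) by lra.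
    assert (Hh : 0 < h).
    { unfold h. assert (1 < / θ); [|lra]. rewrite <- Rinv_1. apply Rinv_lt_contravar; lra. }
    assert (H1h : θ * (1 + h) = 1) by (unfold h; field; lra).
    exists (1 + / h). intros k.
    assert (Hpow : θ ^ k * (1 + h) ^ k = 1) by (rewrite <- Rpow_mult_distr, H1h; apply pow1).
    assert (Hpos : 0 < (1 + h) ^ k) by (apply pow_lt; lra).
    pose proof (poly k h Hh) as Hb.
    assert (HS : INR (S k) <= (1 + / h) * (1 + h) ^ k).
    { rewrite S_INR. assert (Hk : 0 <= INR k) by apply pos_INR.
      assert (0 < / h) by (apply Rinv_0_lt_compat; lra).
      apply Rle_trans with ((1 + / h) * (1 + INR k * h)).
      - assert (Hhh : / h * h = 1) by (field; lra). nra.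
      - apply Rmult_le_compat_l; lra. }
    apply Rmult_le_reg_r with ((1 + h) ^ k); [exact Hpos|].
    rewrite Rmult_assoc, Hpow, Rmult_1_r. exact HS.
Qed.

Lemma poly_geo p : forall θ, 0 <= θ < 1 -> exists D, forall k, INR (S k) ^ p * θ ^ k <= D.
Proof.
  induction p; intros θ Hθ.
  - exists 1. intros k. simpl. rewrite Rmult_1_l. apply pow_le1. lra.
  - set (θ' := sqrt θ).
    assert (H0 : 0 <= θ') by apply sqrt_pos.
    assert (H1 : θ' < 1) by (unfold θ'; rewrite <- sqrt_1; apply sqrt_lt_1; lra).
    destruct (IHp θ' (conj H0 H1)) as [D1 HD1]. destruct (lin_geo θ' (conj H0 H1)) as [D2 HD2].
    exists (D1 * D2). intros k.
    assert (Hθθ : θ = θ' * θ') by (unfold θ'; rewrite sqrt_sqrt; lra).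
    replace (INR (S k) ^ S p * θ ^ k) with ((INR (S k) ^ p * θ' ^ k) * (INR (S k) * θ' ^ k))
      by (rewrite Hθθ, Rpow_mult_distr; simpl; ring).
    apply Rmult_le_compat; [| |apply HD1|apply HD2].
    + apply Rmult_le_pos; apply pow_le; [apply pos_INR|exact H0].
    + apply Rmult_le_pos; [apply pos_INR|apply pow_le, H0].
Qed.

Lemma expc_list_S a n : expc_list a (S n) = expc a (S n) :: expc_list a n.
Proof. reflexivity. Qed.

Lemma expc_list_nth a n j : (j <= n)%nat -> nth j (expc_list a n) 0 = expc a (n - j).
Proof.
  revert j; induction n; intros j Hj.
  - assert (j = 0%nat) by lia. subst. reflexivity.
  - rewrite expc_list_S. destruct j as [|j]; [reflexivity|]. simpl. apply IHn. lia.
Qed.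

Lemma expc_rec a n : expc a (S n) =
  sum_f_R0 (fun j => INR (S j) * a (S j) * expc a (n - j)) n / INR (S n).
Proof.
  unfold expc at 1. simpl. f_equal. apply sum_eq. intros i Hi. rewrite expc_list_nth by lia. reflexivity.
Qed.

Section Rad.
Variable a : nat -> R.
Variable ρ : R.
Hypothesis Hρ : 0 < ρ.
Hypothesis Hρ3 : ρ ^ 3 = 4.
Hypothesis Ha0 : forall n, (1 <= n)%nat -> 0 <= a n.
Hypothesis Hup : forall n, (1 <= n)%nat -> INR n * a n <= INR (S n) ^ 6 * ρ ^ n.
Hypothesis Hlow : forall m, (1 <= m)%nat -> 4 ^ m / INR (3 * m) <= a (3 * m)%nat.

Lemma b_nonneg n : 0 <= expc a n.
Proof.
  induction n as [n IH] using (well_founded_induction lt_wf).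
  destruct n as [|n]; [unfold expc; simpl; lra|].
  rewrite expc_rec. apply Rmult_le_pos; [|left; apply Rinv_0_lt_compat, lt_0_INR; lia].
  apply cond_pos_sum. intros j. apply Rmult_le_pos; [apply Rmult_le_pos; [apply pos_INR|apply Ha0; lia]|].
  apply IH. lia.
Qed.

Lemma b_ge_a n : (1 <= n)%nat -> a n <= expc a n.
Proof.
  intros Hn. destruct n as [|n]; [lia|]. rewrite expc_rec.
  destruct n as [|n].
  - simpl. assert (expc a 0 = 1) as -> by reflexivity. unfold Rdiv. rewrite Rinv_1. lra.
  - rewrite tech5. replace (S n - S n)%nat with 0%nat by lia.
    assert (Hb0 : expc a 0 = 1) by reflexivity. rewrite Hb0.
    assert (0 <= sum_f_R0 (fun j => INR (S j) * a (S j) * expc a (S n - j)) n).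
    { apply cond_pos_sum. intros j. apply Rmult_le_pos; [apply Rmult_le_pos; [apply pos_INR|apply Ha0; lia]|apply b_nonneg]. }
    assert (HI : 0 < INR (S (S n))) by (apply lt_0_INR; lia).
    unfold Rdiv. apply Rmult_le_reg_r with (INR (S (S n))); [exact HI|].
    rewrite Rmult_assoc, Rinv_l by lra. rewrite Rmult_1_r.
    pose proof (Ha0 (S (S n)) ltac:(lia)). nra.
Qed.

Lemma sum_ge_term (f : nat -> R) N i : (forall j, 0 <= f j) -> (i <= N)%nat -> f i <= sum_f_R0 f N.
Proof.
  intros Hf Hi. induction N.
  - assert (i = 0%nat) by lia. subst. simpl. lra.
  - destruct (Nat.eq_dec i (S N)) as [->|Hne].
    + rewrite tech5. pose proof (cond_pos_sum f N Hf). lra.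
    + rewrite tech5. specialize (IHN ltac:(lia)). specialize (Hf (S N)). lra.
Qed.

Lemma b_upper r : 0 <= r -> r * ρ < 1 -> exists σ E, 0 < σ /\ σ * r < 1 /\ forall n, expc a n <= E * σ ^ n.
Proof.
  intros Hr0 Hr.
  set (δ := (1 - ρ * r) / (2 * (r + 1))).
  assert (Hδ : 0 < δ) by (unfold δ; apply Rdiv_lt_0_compat; lra).
  assert (Hδr : δ * (r + 1) = (1 - ρ * r) / 2) by (unfold δ; field; lra).
  set (σ := ρ + δ). set (τ := ρ + δ / 2).
  assert (Hσr : σ * r < 1) by (unfold σ; nra).
  set (θ := ρ / τ).
  assert (Hτ : 0 < τ) by (unfold τ; lra).
  assert (Hθ : 0 <= θ < 1).
  { unfold θ. split; [apply Rlt_le, Rdiv_lt_0_compat; lra|].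
    apply Rmult_lt_reg_r with τ; [lra|]. unfold Rdiv. rewrite Rmult_assoc, Rinv_l by lra. unfold τ; lra. }
  destruct (poly_geo 6 θ Hθ) as [D HD].
  assert (HD0 : 0 <= D) by (specialize (HD 0%nat); simpl in HD; lra).
  assert (Hk : forall k, (1 <= k)%nat -> INR k * a k <= D * τ ^ k).
  { intros k Hk. apply Rle_trans with (INR (S k) ^ 6 * ρ ^ k); [apply Hup, Hk|].
    replace (ρ ^ k) with (θ ^ k * τ ^ k) by (rewrite <- Rpow_mult_distr; unfold θ; f_equal; field; lra).
    rewrite <- Rmult_assoc. apply Rmult_le_compat_r; [apply pow_le; lra|apply HD]. }
  set (q := τ / σ).
  assert (Hσ : 0 < σ) by (unfold σ; lra).
  assert (Hq : 0 < q < 1).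
  { unfold q. split; [apply Rdiv_lt_0_compat; lra|].
    apply Rmult_lt_reg_r with σ; [lra|]. unfold Rdiv. rewrite Rmult_assoc, Rinv_l by lra. unfold τ, σ; lra. }
  destruct (INR_archimed 1 (D * q / (1 - q))) as [n0 Hn0]; [lra|]. rewrite Rmult_1_r in Hn0.
  set (E := 1 + sum_f_R0 (fun i => expc a i / σ ^ i) n0).
  assert (Hsum0 : 0 <= sum_f_R0 (fun i => expc a i / σ ^ i) n0).
  { apply cond_pos_sum. intros i. unfold Rdiv. apply Rmult_le_pos; [apply b_nonneg|].
    left; apply Rinv_0_lt_compat, pow_lt; lra. }
  exists σ, E. split; [exact Hσ|]. split; [exact Hσr|].
  intros n. induction n as [n IH] using (well_founded_induction lt_wf).
  assert (Hσn : 0 < σ ^ n) by (apply pow_lt; lra).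
  destruct (le_lt_dec n n0) as [Hle|Hlt].
  - assert (H := sum_ge_term (fun i => expc a i / σ ^ i) n0 n).
    assert (H' : expc a n / σ ^ n <= sum_f_R0 (fun i => expc a i / σ ^ i) n0).
    { apply H; [|exact Hle]. intros i. unfold Rdiv. apply Rmult_le_pos; [apply b_nonneg|].
      left; apply Rinv_0_lt_compat, pow_lt; lra. }
    unfold E. apply Rmult_le_reg_r with (/ σ ^ n); [apply Rinv_0_lt_compat; lra|].
    rewrite Rmult_assoc, Rinv_r by lra. unfold Rdiv in H'. pose proof (b_nonneg n). 
    assert (0 <= expc a n * / σ ^ n) by (apply Rmult_le_pos; [lra|left; apply Rinv_0_lt_compat; lra]). lra.
  - destruct n as [|n']; [lia|]. rewrite expc_rec.
    assert (HS : sum_f_R0 (fun j => INR (S j) * a (S j) * expc a (n' - j)) n' <=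
                 E * D * σ ^ S n' * sum_f_R0 (fun j => q ^ S j) n').
    { rewrite scal_sum. apply sum_Rle. intros j Hj.
      apply Rle_trans with (D * τ ^ S j * (E * σ ^ (n' - j))).
      - apply Rmult_le_compat; [apply Rmult_le_pos; [apply pos_INR|apply Ha0; lia]|apply b_nonneg| |].
        + apply Hk. lia.
        + apply IH. lia.
      - right. replace τ with (q * σ) by (unfold q; field; lra).
        replace (σ ^ S n') with (σ ^ S j * σ ^ (n' - j)) by (rewrite <- pow_add; f_equal; lia).
        rewrite Rpow_mult_distr. ring. }
    assert (HG : sum_f_R0 (fun j => q ^ S j) n' <= q / (1 - q)).
    { replace (sum_f_R0 (fun j => q ^ S j) n') with (q * sum_f_R0 (fun j => q ^ j) n')
        by (rewrite scal_sum; apply sum_eq; intros; simpl; ring).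
      rewrite tech3 by lra. unfold Rdiv. apply Rmult_le_compat_l; [lra|].
      assert (0 < q ^ S n') by (apply pow_lt; lra). assert (0 < / (1 - q)) by (apply Rinv_0_lt_compat; lra).
      nra. }
    assert (HE : 0 <= E) by (unfold E; lra).
    assert (HN : D * q / (1 - q) < INR (S n')).
    { apply Rlt_le_trans with (INR n0); [exact Hn0|apply le_INR; lia]. }
    assert (HSn : 0 < INR (S n')) by (apply lt_0_INR; lia).
    pose proof (pow_lt σ (S n') Hσ) as HσS.
    assert (HEDs : 0 <= E * D * σ ^ S n') by (apply Rmult_le_pos; [apply Rmult_le_pos|]; lra).
    apply Rle_trans with (E * D * σ ^ S n' * (q / (1 - q)) / INR (S n')).
    + unfold Rdiv. apply Rmult_le_compat_r; [left; apply Rinv_0_lt_compat; lra|].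
      apply Rle_trans with (E * D * σ ^ S n' * sum_f_R0 (fun j => q ^ S j) n'); [exact HS|].
      apply Rmult_le_compat_l; [exact HEDs|exact HG].
    + apply Rmult_le_reg_r with (INR (S n')); [exact HSn|].
      unfold Rdiv. rewrite Rmult_assoc, Rinv_l by lra. rewrite Rmult_1_r.
      assert (Hdq : D * (q * / (1 - q)) <= INR (S n')) by (unfold Rdiv in HN; lra).
      assert (HEs : 0 <= E * σ ^ S n') by (apply Rmult_le_pos; lra).
      replace (E * D * σ ^ S n' * (q * / (1 - q))) with ((E * σ ^ S n') * (D * (q * / (1 - q)))) by ring.
      apply Rmult_le_compat_l; [exact HEs|exact Hdq].
Qed.

Lemma radius : is_radius (expc a) (/ ρ).
Proof.
  split; [left; apply Rinv_0_lt_compat; exact Hρ|]. split.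
  - intros r [Hr0 Hr]. assert (Hrρ : r * ρ < 1).
    { apply Rmult_lt_compat_r with (r := ρ) in Hr; [|exact Hρ]. rewrite Rinv_l in Hr by lra. exact Hr. }
    destruct (b_upper r Hr0 Hrρ) as [σ [E [Hσ [Hσr HE]]]].
    assert (Hσr0 : 0 <= σ * r) by (apply Rmult_le_pos; lra).
    assert (HE0 : 0 <= E) by (specialize (HE 0%nat); simpl in HE; pose proof (b_nonneg 0); unfold expc in *; simpl in *; lra).
    set (U := fun N => sum_f_R0 (fun n => Rabs (expc a n) * r ^ n) N).
    assert (Hterm : forall n, 0 <= Rabs (expc a n) * r ^ n) by (intros; apply Rmult_le_pos; [apply Rabs_pos|apply pow_le; lra]).
    destruct (growing_cv U) as [l Hl].
    + intros N. unfold U. rewrite tech5. specialize (Hterm (S N)). lra.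
    + exists (E / (1 - σ * r)). intros x [N ->]. unfold U.
      apply Rle_trans with (sum_f_R0 (fun n => E * (σ * r) ^ n) N).
      * apply sum_Rle. intros n _. rewrite Rabs_pos_eq by apply b_nonneg.
        rewrite Rpow_mult_distr, <- Rmult_assoc. apply Rmult_le_compat_r; [apply pow_le; lra|apply HE].
      * replace (sum_f_R0 (fun n => E * (σ * r) ^ n) N) with (E * sum_f_R0 (fun n => (σ * r) ^ n) N)
          by (rewrite scal_sum; apply sum_eq; intros; ring).
        rewrite tech3 by lra. unfold Rdiv. rewrite <- Rmult_assoc. apply Rmult_le_compat_r.
        -- left; apply Rinv_0_lt_compat; lra.
        -- pose proof (pow_le (σ * r) (S N) Hσr0). nra.
    + exists l. exact Hl.
  - intros r Hr [M HM].
    assert (Hρi : 0 < / ρ) by (apply Rinv_0_lt_compat; lra).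
    assert (Hr0 : 0 < r) by lra.
    assert (Hrρ : 1 < r * ρ).
    { apply Rmult_lt_compat_r with (r := ρ) in Hr; [|exact Hρ]. rewrite Rinv_l in Hr by lra. exact Hr. }
    set (c := 4 * r ^ 3).
    assert (Hc : 1 < c).
    { unfold c. rewrite <- Hρ3, <- Rpow_mult_distr, Rmult_comm. 
      set (t := r * ρ). assert (Ht : 1 < t) by exact Hrρ. simpl. rewrite Rmult_1_r. assert (1 < t * t) by nra. assert (1 * 1 < t * (t * t)) by (apply Rmult_le_0_lt_compat; lra). lra. }
    set (θ := / c).
    assert (Hθ : 0 <= θ < 1).
    { unfold θ. split; [left; apply Rinv_0_lt_compat; lra|]. rewrite <- Rinv_1. apply Rinv_lt_contravar; lra. }
    destruct (poly_geo 2 θ Hθ) as [D HD].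
    assert (HD1 : 1 <= D) by (specialize (HD 0%nat); simpl in HD; lra).
    destruct (INR_archimed 1 (3 * D * M)) as [m Hm]; [lra|]. rewrite Rmult_1_r in Hm.
    assert (Hm1 : (1 <= m)%nat).
    { destruct m; [|lia]. simpl in Hm. pose proof (HM 0%nat). simpl in H.
      rewrite Rabs_pos_eq in H by (unfold expc; simpl; lra). unfold expc in H; simpl in H. nra. }
    specialize (HM (3 * m)%nat). rewrite Rabs_pos_eq in HM by apply b_nonneg.
    pose proof (b_ge_a (3 * m)%nat ltac:(lia)) as Hba. pose proof (Hlow m Hm1) as Hl.
    assert (Hcm : INR (S m) ^ 2 <= D * c ^ m).
    { specialize (HD m). replace (INR (S m) ^ 2) with (INR (S m) ^ 2 * θ ^ m * c ^ m).
      - apply Rmult_le_compat_r; [apply pow_le; lra|exact HD].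
      - rewrite Rmult_assoc, <- Rpow_mult_distr. unfold θ. rewrite Rinv_l by lra. rewrite pow1. ring. }
    assert (Hr3 : r ^ (3 * m) = (r ^ 3) ^ m) by (rewrite pow_mult; reflexivity).
    assert (H4c : 4 ^ m * r ^ (3 * m) = c ^ m) by (rewrite Hr3; unfold c; rewrite Rpow_mult_distr; reflexivity).
    assert (Hm3 : INR (3 * m) = 3 * INR m) by (rewrite mult_INR; simpl; ring).
    assert (HmP : 0 < INR m) by (apply lt_0_INR; lia).
    assert (Hpr : 0 <= r ^ (3 * m)) by (apply pow_le; lra).
    assert (Hlow2 : c ^ m / (3 * INR m) <= M).
    { rewrite <- H4c. apply Rle_trans with (expc a (3 * m) * r ^ (3 * m)); [|exact HM].
      unfold Rdiv. rewrite Rmult_comm, <- Rmult_assoc. apply Rmult_le_compat_r; [exact Hpr|].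
      rewrite Rmult_comm. rewrite <- Hm3. apply Rle_trans with (a (3 * m)%nat); [exact Hl|exact Hba]. }
    rewrite S_INR in Hcm.
    assert (Hcm2 : (INR m + 1) ^ 2 / (3 * INR m) <= D * M).
    { apply Rle_trans with (D * (c ^ m / (3 * INR m))).
      - unfold Rdiv. rewrite <- Rmult_assoc. apply Rmult_le_compat_r; [left; apply Rinv_0_lt_compat; lra|exact Hcm].
      - apply Rmult_le_compat_l; lra. }
    assert (Hx : (INR m + 1) / 3 <= (INR m + 1) ^ 2 / (3 * INR m)).
    { unfold Rdiv. apply Rmult_le_reg_r with (3 * INR m); [lra|].
      rewrite !Rmult_assoc, Rinv_l by lra. 
      replace (/ 3 * (3 * INR m)) with (INR m) by (field; lra). simpl. nra. }
    nra.
Qed.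
End Rad.


Lemma ln0 : ln 0 = 0.
Proof. unfold ln. case (Rlt_dec 0 0); intros H; [exfalso; exact (Rlt_irrefl 0 H)|reflexivity]. Qed.

Lemma ln_le' x y : 0 < x -> x <= y -> ln x <= ln y.
Proof. intros Hx [H|H]; [left; apply ln_increasing; lra|right; subst; reflexivity]. Qed.

Lemma ln2_pos : 0 < ln 2.
Proof. rewrite <- ln_1. apply ln_increasing; lra. Qed.

Lemma ratio_up k n : (1 <= n)%nat -> (k ^ 3 <= 4 ^ n)%nat -> ln (INR k) / INR n <= 2 / 3 * ln 2.
Proof.
  intros Hn Hk. pose proof ln2_pos. assert (HnP : 0 < INR n) by (apply lt_0_INR; lia).
  destruct k as [|k].
  - simpl. rewrite ln0. unfold Rdiv. rewrite Rmult_0_l. lra.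
  - assert (HkP : 0 < INR (S k)) by (apply lt_0_INR; lia).
    apply le_INR in Hk. rewrite !pow_INR in Hk. replace (INR 4) with (2 ^ 2) in Hk by (simpl; ring).
    rewrite <- pow_mult in Hk.
    apply ln_le' in Hk; [|apply pow_lt; lra]. rewrite !ln_pow in Hk by lra.
    rewrite mult_INR in Hk. replace (INR 3) with 3 in Hk by (simpl; ring). replace (INR 2) with 2 in Hk by (simpl; ring).
    apply Rmult_le_reg_r with (INR n); [lra|]. unfold Rdiv. rewrite Rmult_assoc, Rinv_l by lra. nra.
Qed.

Lemma ratio_low k m : (1 <= m)%nat -> (4 ^ m <= k)%nat -> 2 / 3 * ln 2 <= ln (INR k) / INR (3 * m).
Proof.
  intros Hm Hk. pose proof ln2_pos. assert (HmP : 0 < INR m) by (apply lt_0_INR; lia).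
  apply le_INR in Hk. rewrite pow_INR in Hk. replace (INR 4) with (2 ^ 2) in Hk by (simpl; ring).
  rewrite <- pow_mult in Hk. apply ln_le' in Hk; [|apply pow_lt; lra]. rewrite ln_pow in Hk by lra.
  rewrite mult_INR in Hk. rewrite mult_INR. replace (INR 3) with 3 by (simpl; ring). replace (INR 2) with 2 in Hk by (simpl; ring).
  apply Rmult_le_reg_r with (3 * INR m); [lra|]. unfold Rdiv. replace (ln (INR k) * / (3 * INR m) * (3 * INR m)) with (ln (INR k)) by (field; lra). replace (2 * / 3 * ln 2 * (3 * INR m)) with (2 * INR m * ln 2) by (field; lra). lra.
Qed.

Lemma cube_le x y : 0 <= x -> 0 <= y -> x ^ 3 <= y ^ 3 -> x <= y.
Proof.
  intros Hx Hy H. destruct (Rle_lt_dec x y) as [|Hl]; [assumption|]. exfalso.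
  simpl in H. assert (y * y <= x * x) by nra. assert (y * (y * y) < x * (x * x)).
  { apply Rle_lt_trans with (y * (x * x)); [apply Rmult_le_compat_l; lra|]. apply Rmult_lt_compat_r; nra. }
  lra.
Qed.

Definition ρ := Rpower 2 (2 / 3).
Lemma ρ_pos : 0 < ρ. Proof. unfold ρ, Rpower. apply exp_pos. Qed.
Lemma ρ3 : ρ ^ 3 = 4.
Proof.
  unfold ρ. rewrite <- Rpower_pow by (unfold Rpower; apply exp_pos). rewrite Rpower_mult.
  replace (2 / 3 * INR 3) with (INR 2) by (simpl; field). rewrite Rpower_pow by lra. simpl; ring.
Qed.

Definition foldz (n : nat) (l : list ((Z3 -> bool) * nat)) : R :=
  fold_right (fun p s => INR (snd p) / INR n + s) 0 l.

Lemma fold_nonneg n l : 0 < INR n -> 0 <= foldz n l.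
Proof.
  intros Hn. unfold foldz. induction l; simpl; [lra|].
  assert (0 <= INR (snd a) / INR n) by (unfold Rdiv; apply Rmult_le_pos; [apply pos_INR|left; apply Rinv_0_lt_compat; lra]). lra.
Qed.

Lemma fold_le n l B : 0 < INR n -> (forall p, In p l -> INR (snd p) <= B) ->
  foldz n l <= INR (length l) * (B / INR n).
Proof.
  intros Hn. unfold foldz. induction l as [|p l IH]; intros HB; cbn [fold_right length]; [simpl; lra|].
  unfold foldz in IH. rewrite S_INR.
  assert (INR (snd p) / INR n <= B / INR n).
  { unfold Rdiv. apply Rmult_le_compat_r; [left; apply Rinv_0_lt_compat; lra|apply HB; left; reflexivity]. }
  assert (fold_right (fun p s => INR (snd p) / INR n + s) 0 l <= INR (length l) * (B / INR n))
    by (apply IH; intros; apply HB; right; assumption). lra.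
Qed.

Lemma fold_ge n l p : 0 < INR n -> In p l -> INR (snd p) / INR n <= foldz n l.
Proof.
  intros Hn. induction l as [|q l IH]; intros Hp; simpl; [destruct Hp|].
  pose proof (fold_nonneg n l Hn). unfold foldz in *.
  assert (0 <= INR (snd q) / INR n) by (unfold Rdiv; apply Rmult_le_pos; [apply pos_INR|left; apply Rinv_0_lt_compat; lra]).
  destruct Hp as [->|Hp]; [lra|]. specialize (IH Hp). lra.
Qed.

Lemma inL3_Lst m : (1 <= m)%nat -> inL3 (Lst m) /\ has_index (Lst m) (3 * m).
Proof. intros Hm. split; [split; [apply Lst_sub; exact Hm|exists (3 * m)%nat]|]; apply Lst_index; exact Hm. Qed.

Lemma Fcount_ex L n : inL3 L -> has_index L n -> exists k, Fcount L k.
Proof. intros [HL _] [reps [Hlen [_ Hcov]]]. exact (Fcount_exists L n reps HL Hlen Hcov). Qed.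

Lemma Fcount_b L n k : inL3 L -> has_index L n -> Fcount L k -> (k ^ 3 <= 4 ^ n)%nat.
Proof. intros [HL _] [reps [Hlen [_ Hcov]]]. exact (Fcount_bound L n reps HL Hlen Hcov k). Qed.

Lemma zcoef_exists n : (1 <= n)%nat -> exists c, zcoef n c.
Proof.
  intros Hn.
  destruct (fin_sub (map hnfL (alltup 6 n)) (fun L => inL3 L /\ has_index L n)) as [k0 [l0 [H1 [H2 H3]]]].
  { intros L [HL Hi]. apply subgroups_cover; assumption. }
  set (kof := fun L => match excluded_middle_informative (exists k, Fcount L k) with
                       | left H => proj1_sig (constructive_indefinite_description _ H) | right _ => 0%nat end).
  set (l := map (fun L => (L, kof L)) l0).
  exists (fold_right (fun p s => INR (snd p) / INR n + s) 0 l), l.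
  assert (Hfst : map fst l = l0) by (unfold l; rewrite map_map; apply map_id).
  rewrite Hfst. split; [exact H1|]. split; [exact H3|]. split; [|reflexivity].
  intros p Hp. unfold l in Hp. apply in_map_iff in Hp. destruct Hp as [L [<- HL]]. simpl.
  apply H3 in HL. destruct HL as [HL Hi]. unfold kof.
  destruct (excluded_middle_informative _) as [H|H].
  - exact (proj2_sig (constructive_indefinite_description _ H)).
  - exfalso. apply H. eapply Fcount_ex; eassumption.
Qed.

Lemma zcoef_props n c : (1 <= n)%nat -> zcoef n c ->
  0 <= c /\ INR n * c <= INR (S n) ^ 6 * ρ ^ n.
Proof.
  intros Hn [l [H1 [H2 [H3 ->]]]].
  assert (HnP : 0 < INR n) by (apply lt_0_INR; lia).
  split; [apply (fold_nonneg n l HnP)|].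
  assert (Hk : forall p, In p l -> INR (snd p) <= ρ ^ n).
  { intros p Hp. assert (Hf : In (fst p) (map fst l)) by (apply in_map, Hp).
    apply H2 in Hf. destruct Hf as [HL Hi].
    pose proof (Fcount_b _ _ _ HL Hi (H3 p Hp)) as Hb.
    apply cube_le; [apply pos_INR|apply pow_le; left; apply ρ_pos|].
    apply le_INR in Hb. rewrite !pow_INR in Hb. rewrite <- pow_mult, Nat.mul_comm, pow_mult, ρ3.
    replace (INR 4) with 4 in Hb by (simpl; ring). exact Hb. }
  assert (Hlen : (length l <= S n ^ 6)%nat).
  { rewrite <- (length_map fst l), <- alltup_length, <- (length_map hnfL (alltup 6 n)).
    apply NoDup_incl_length; [exact H1|]. intros L HL. apply H2 in HL. apply subgroups_cover; apply HL. }
  pose proof (fold_le n l (ρ ^ n) HnP Hk) as Hf. fold (foldz n l).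
  apply le_INR in Hlen. rewrite pow_INR in Hlen.
  assert (0 <= ρ ^ n) by (apply pow_le; left; apply ρ_pos).
  apply Rle_trans with (INR n * (INR (length l) * (ρ ^ n / INR n))); [apply Rmult_le_compat_l; lra|].
  replace (INR n * (INR (length l) * (ρ ^ n / INR n))) with (INR (length l) * ρ ^ n) by (field; lra).
  apply Rmult_le_compat_r; lra.
Qed.

Lemma zcoef_low m c : (1 <= m)%nat -> zcoef (3 * m) c -> 4 ^ m / INR (3 * m) <= c.
Proof.
  intros Hm [l [H1 [H2 [H3 ->]]]].
  assert (HnP : 0 < INR (3 * m)) by (apply lt_0_INR; lia).
  destruct (inL3_Lst m Hm) as [HL Hi].
  assert (Hin : In (Lst m) (map fst l)) by (apply H2; split; assumption).
  apply in_map_iff in Hin. destruct Hin as [p [Hp Hpl]].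
  pose proof (H3 p Hpl) as Hf. rewrite Hp in Hf. apply Lst_count in Hf; [|exact Hm].
  apply Rle_trans with (INR (snd p) / INR (3 * m)); [|apply (fold_ge _ l p HnP Hpl)].
  unfold Rdiv. apply Rmult_le_compat_r; [left; apply Rinv_0_lt_compat; lra|].
  apply le_INR in Hf. rewrite pow_INR in Hf. replace (INR 4) with 4 in Hf by (simpl; ring). exact Hf.
Qed.

Theorem mainTheorem11 :
  (forall L n, inL3 L -> has_index L n -> exists k, Fcount L k) /\
  (forall eps, 0 < eps -> exists N : nat,
     forall L n k, inL3 L -> has_index L n -> (N <= n)%nat -> Fcount L k ->
       ln (INR k) / INR n <= 2 / 3 * ln 2 + eps) /\
  (forall eps, 0 < eps -> forall N : nat, exists L n k,
     inL3 L /\ has_index L n /\ (N <= n)%nat /\ Fcount L k /\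
       2 / 3 * ln 2 - eps <= ln (INR k) / INR n) /\
  (forall n, (1 <= n)%nat -> exists c, zcoef n c) /\
  (forall a : nat -> R, (forall n, (1 <= n)%nat -> zcoef n (a n)) ->
     is_radius (expc a) (Rpower 2 (- (2 / 3)))).
Proof.
  split; [exact Fcount_ex|]. split.
  { intros eps Heps. exists 1%nat. intros L n k HL Hi HN Hk.
    pose proof (ratio_up k n HN (Fcount_b L n k HL Hi Hk)). lra. }
  split.
  { intros eps Heps N. destruct (inL3_Lst (S N) ltac:(lia)) as [HL Hi].
    destruct (Fcount_ex _ _ HL Hi) as [k Hk].
    exists (Lst (S N)), (3 * S N)%nat, k. split; [exact HL|]. split; [exact Hi|]. split; [lia|].
    split; [exact Hk|]. pose proof (ratio_low k (S N) ltac:(lia) (Lst_count (S N) ltac:(lia) k Hk)). lra. }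
  split; [exact zcoef_exists|].
  intros a Ha. rewrite Rpower_Ropp. fold ρ.
  apply (radius a ρ ρ_pos ρ3).
  - intros n Hn. apply (zcoef_props n (a n) Hn (Ha n Hn)).
  - intros n Hn. apply (zcoef_props n (a n) Hn (Ha n Hn)).
  - intros m Hm. apply zcoef_low; [exact Hm|]. apply Ha. lia.
Qed.
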